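(* Let $k$ be a field, let $V_\bullet$ be a complex of finite dimensional $k$-vector spaces, indexed cohomologically (differential $d_i:V_i\to V_{i+1}$, $i\in\mathbb{Z}$), and let $\phi_\bullet:V_\bullet\to V_\bullet$ be a chain map. For each $i$ let $\phi_i^H:H^i(V_\bullet)\to H^i(V_\bullet)$ be the induced map on cohomology. Then the following are equivalent: (a) $\phi_\bullet$ is chain homotopic to a commutator in the endomorphism ring of the complex $V_\bullet$ (i.e. to a chain map of the form $\alpha_\bullet\beta_\bullet-\beta_\bullet\alpha_\bullet$ with $\alpha_\bullet,\beta_\bullet$ chain endomorphisms of $V_\bullet$); (b) $\operatorname{tr}(\phi_i^H)=0$ for every index $i\in\mathbb{Z}$.
   Context: $\operatorname{tr}$ denotes the trace of an endomorphism of a finite dimensional vector space. $H^i(V_\bullet)=\ker d_i/\operatorname{im} d_{i-1}$. *)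

(* Defs.v *)
From HB Require Import structures.
From mathcomp Require Import all_boot all_order all_algebra.
Set Implicit Arguments. Unset Strict Implicit. Unset Printing Implicit Defensive.
Import Order.TTheory GRing.Theory Num.Theory.
Local Open Scope ring_scope.

(* A cohomologically indexed complex of finite dimensional
   k-vector spaces is given by dimensions [n : int -> nat] (V_i = k^(n i),
   row vectors) and differentials [d i : 'M_(n i, n (i+1))], acting on row
   vectors: d_i(v) = v *m d i.  Composition "f then g" is f *m g. *)

Section Complexes.
Variables (k : fieldType) (n : int -> nat).

Definition is_complex (d : forall i : int, 'M[k]_(n i, n (i + 1))) : Prop :=
  forall i : int, d i *m d (i + 1) = 0.

Definition eq_prev (i : int) : n (i - 1 + 1) = n i := congr1 n (subrK 1 i).

Definition dprev (d : forall i : int, 'M[k]_(n i, n (i + 1))) (i : int)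
  : 'M[k]_(n (i - 1), n i) := castmx (erefl, eq_prev i) (d (i - 1)).

Definition is_chain_map (d : forall i : int, 'M[k]_(n i, n (i + 1)))
  (phi : forall i : int, 'M[k]_(n i)) : Prop :=
  forall i : int, d i *m phi (i + 1) = phi i *m d i.

Definition chain_homotopic (d : forall i : int, 'M[k]_(n i, n (i + 1)))
  (phi psi : forall i : int, 'M[k]_(n i)) : Prop :=
  exists h : forall i : int, 'M[k]_(n (i + 1), n i),
    forall i : int,
      phi i - psi i
      = d i *m h i + castmx (eq_prev i, eq_prev i) (h (i - 1) *m d (i - 1)).

(* As a concrete model of the
   quotient we take the complement W = (ker d_i :\: im d_{i-1}) of the
   image inside the kernel; the rows of [cohom_basis] are a basis of W,
   whose classes form a basis of H^i. *)
Definition cycles (d : forall i : int, 'M[k]_(n i, n (i + 1))) (i : int)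
  : 'M[k]_(n i) := kermx (d i).

Definition cohom_basis (d : forall i : int, 'M[k]_(n i, n (i + 1))) (i : int) :=
  row_base (cycles d i :\: dprev d i)%MS.

(* Matrix of the induced map phi^H_i : H^i -> H^i in the basis of classes of
   the rows w_j of [cohom_basis]: write phi_i(w_j) = sum_l a_jl w_l + b_j
   with b_j in im d_{i-1}; the matrix is (a_jl). *)
Definition cohom_map (d : forall i : int, 'M[k]_(n i, n (i + 1)))
  (phi : forall i : int, 'M[k]_(n i)) (i : int) :=
  let B := cohom_basis d i in
  let C := row_base (dprev d i) in
  lsubmx ((B *m phi i) *m pinvmx (col_mx B C)).

End Complexes.

(* Main.v *)
Require Import Defs.
From HB Require Import structures.
From mathcomp Require Import all_boot all_order all_algebra.
From mathcomp Require Import zify.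
Set Implicit Arguments. Unset Strict Implicit. Unset Printing Implicit Defensive.
Import Order.TTheory GRing.Theory Num.Theory.
Local Open Scope ring_scope.

Section TD.
Variables (k : fieldType) (m : nat).

Lemma pairing (X Z : 'M[k]_m) : (mxvec X *m (mxvec Z^T)^T) 0 0 = \tr (X *m Z).
Proof.
rewrite mxE /mxtrace.
rewrite (reindex (uncurry (@mxvec_index m m))) /=; last first.
  by apply: onW_bij; have [g h1 h2] := curry_mxvec_bij m m; exists g => x; [apply: h1|apply: h2].
under [RHS]eq_bigr do rewrite mxE.
rewrite pair_big /=; apply: eq_bigr => -[i j] _ /=.
by rewrite !mxE !mxvecE mxE.
Qed.

Lemma deltaM (i j : 'I_m) (W : 'M[k]_m) a b :
  (delta_mx i j *m W) a b = (a == i)%:R * W j b.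
Proof.
rewrite mxE (bigD1 j) //= big1 => [|c cj]; last by rewrite mxE (negPf cj) andbF mul0r.
by rewrite mxE eqxx andbT addr0.
Qed.

Lemma trdelta (i j : 'I_m) (W : 'M[k]_m) : \tr (delta_mx i j *m W) = W j i.
Proof.
rewrite /mxtrace (bigD1 i) //= big1 => [|a ai]; last by rewrite deltaM (negPf ai) mul0r.
by rewrite deltaM eqxx mul1r addr0.
Qed.

Lemma td (Y B : 'M[k]_m) :
  (forall Z : 'M[k]_m, Y *m Z = Z *m Y -> \tr (B *m Z) = 0) ->
  exists X, B = X *m Y - Y *m X.
Proof.
move=> hZ.
pose L := lin_mx (mulmxr Y) - lin_mx (mulmx Y).
have LE X : mxvec X *m L = mxvec (X *m Y - Y *m X).
  by rewrite mulmxBr !mul_vec_lin /= linearB.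
suff : (mxvec B <= L)%MS.
  case/submxP=> w e; exists (vec_mx w).
  by apply: (can_inj (@mxvecK _ _ _)); rewrite e -LE vec_mxK.
rewrite submxE; apply/eqP/rowP => j; rewrite [RHS]mxE.
pose v := col j (cokermx L).
pose Z := (vec_mx v^T)^T.
have vZ : v = (mxvec Z^T)^T by rewrite /Z trmxK vec_mxK trmxK.
have Lv : L *m v = 0 by rewrite /v colE mulmxA mulmx_coker mul0mx.
have hYZ : Y *m Z = Z *m Y.
  apply/eqP; rewrite -subr_eq0; apply/eqP/matrixP => a b; rewrite [RHS]mxE.
  rewrite -trdelta mulmxBr raddfB /= !mulmxA [in X in _ - X]mxtrace_mulC.
  rewrite [in X in _ - X]mulmxA -raddfB /= -mulmxBl -pairing -vZ -LE.
  by rewrite -mulmxA Lv mulmx0 mxE.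
have := hZ Z hYZ; rewrite -pairing -vZ /v => <-.
by rewrite colE mulmxA -colE [RHS]mxE.
Qed.
End TD.
Section Hess.
Variable k : fieldType.

Definition hess m (B : 'M[k]_m) := forall a b : 'I_m, (b.+1 < a)%N -> B a b = 0.

Lemma col_reduce m (c : 'cV[k]_m) : exists S Si : 'M[k]_m,
  [/\ S *m Si = 1%:M, Si *m S = 1%:M & forall a : 'I_m, (0 < a)%N -> (S *m c) a 0 = 0].
Proof.
exists (invmx (col_ebase c)), (col_ebase c); split.
- by rewrite mulVmx // col_ebase_unit.
- by rewrite mulmxV // col_ebase_unit.
move=> a a0; rewrite -[X in invmx _ *m X](mulmx_ebase c) !mulmxA mulVmx ?col_ebase_unit // mul1mx.
rewrite mxE big1 // => b _; rewrite mxE.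
have -> : (a == b :> nat) = false by rewrite (ord1 b) /=; case: (nat_of_ord a) a0.
by rewrite mul0r.
Qed.

Lemma hessenberg m (A : 'M[k]_m) (c : 'cV[k]_m) : exists P Pi : 'M[k]_m,
  [/\ P *m Pi = 1%:M, Pi *m P = 1%:M, hess (P *m A *m Pi) &
      forall a : 'I_m, (0 < a)%N -> (P *m c) a 0 = 0].
Proof.
elim: m A c => [|m IH] A c.
  by exists 1%:M, 1%:M; split; rewrite ?mulmx1 // => [[]].
have [S [Si [SSi SiS Sc]]] := col_reduce c.
pose A0 : 'M[k]_(1 + m) := S *m A *m Si.
have [R [Ri [RRi RiR hR Rc]]] := IH (drsubmx A0) (dlsubmx A0).
pose D : 'M[k]_(1 + m) := block_mx 1%:M 0 0 R.
pose Di : 'M[k]_(1 + m) := block_mx 1%:M 0 0 Ri.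
have DDi : D *m Di = 1%:M by rewrite mulmx_block !mulmx0 !mul0mx !addr0 !add0r mulmx1 RRi -scalar_mx_block.
have DiD : Di *m D = 1%:M by rewrite mulmx_block !mulmx0 !mul0mx !addr0 !add0r mulmx1 RiR -scalar_mx_block.
exists (D *m S), (Si *m Di); split.
- by rewrite -mulmxA (mulmxA S) SSi mul1mx.
- by rewrite -mulmxA (mulmxA Di) DiD mul1mx.
- have -> : D *m S *m A *m (Si *m Di) = D *m A0 *m Di by rewrite /A0 !mulmxA.
  rewrite -[A0]submxK /D /Di !mulmx_block !mulmx0 !mul0mx !addr0 !add0r !mulmx1 !mul1mx.
  apply: (_ : @hess (1 + m) (block_mx (ulsubmx A0) (ursubmx A0 *m Ri) (R *m dlsubmx A0) (R *m drsubmx A0 *m Ri))).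
  move=> a b.
  case: (@splitP 1 m a) => [a' ea|a' ea]; first by rewrite ea (ord1 a').
  have {ea} -> : a = rshift 1 a' :> 'I_(1 + m) by apply: val_inj.
  case: (@splitP 1 m b) => [b' eb|b' eb].
    have {eb} -> : b = lshift m b' :> 'I_(1 + m) by apply: val_inj.
    rewrite block_mxEdl (ord1 b') /= add1n ltnS => ab; exact: Rc.
  have {eb} -> : b = rshift 1 b' :> 'I_(1 + m) by apply: val_inj.
  by rewrite block_mxEdr /= !add1n ltnS => ab; apply: hR.
- pose sc : 'M[k]_(1 + m, 1) := S *m c.
  have Sc0 : sc = col_mx (usubmx sc) 0.
    rewrite -{1}[sc]vsubmxK; congr col_mx; apply/matrixP => i j.
    by rewrite (ord1 j) mxE [RHS]mxE /sc Sc.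
  have -> : D *m S *m c = col_mx (usubmx sc) 0 :> 'M_(1 + m, 1).
    by rewrite -mulmxA -/sc {1}Sc0 /D mul_block_col !mulmx0 !mul0mx !addr0 mul1mx.
  apply: (_ : forall a : 'I_(1 + m), (0 < a)%N -> (col_mx (usubmx sc) 0 : 'M_(1 + m, 1)) a 0 = 0).
  move=> a a0.
  case: (@splitP 1 m a) => [a' ea|a' ea]; first by move: a0; rewrite ea (ord1 a').
  have {ea} -> : a = rshift 1 a' :> 'I_(1 + m) by apply: val_inj.
  by rewrite col_mxEd mxE.
Qed.

End Hess.
Section Bidiag.
Variables (k : fieldType) (m : nat) (dd : 'I_m -> k).

Definition Ybd : 'M[k]_m := \matrix_(i, j) ((i == j)%:R * dd i + (i.+1 == j)%:R).

Lemma YR (A : 'M[k]_m) a b :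
  (A *m Ybd) a b = A a b * dd b + \sum_(c : 'I_m | c.+1 == b) A a c.
Proof.
rewrite mxE.
under eq_bigr do rewrite mxE mulrDr.
rewrite big_split /= (bigD1 b) //= big1 => [|c cb]; last by rewrite (negPf cb) mul0r mulr0.
rewrite eqxx mul1r addr0 [in RHS]big_mkcond /=; congr (_ + _).
by apply: eq_bigr => c _; case: (c.+1 == b); rewrite ?mulr1 ?mulr0.
Qed.

Notation P j := (Ybd ^+ j).

Lemma PS j : P j.+1 = P j *m Ybd.
Proof. by rewrite exprSr. Qed.

Lemma P_low j (a b : 'I_m) : (b < a)%N -> P j a b = 0.
Proof.
elim: j b => [|j IH] b ba; first by rewrite expr0 mxE; move: ba; case: eqP => // ->; rewrite ltnn.
rewrite PS YR IH // mul0r add0r big1 // => c /eqP cb; apply: IH.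
by apply: ltn_trans ba; rewrite -cb.
Qed.

Lemma P_diag j (a : 'I_m) : P j a a = dd a ^+ j.
Proof.
elim: j => [|j IH]; first by rewrite expr0 mxE eqxx.
rewrite PS YR IH exprSr big1 ?addr0 // => c /eqP ca; apply: P_low; by rewrite -ca.
Qed.

Lemma P_high j (a b : 'I_m) : (a + j < b)%N -> P j a b = 0.
Proof.
elim: j b => [|j IH] b ab.
  by rewrite expr0 mxE; move: ab; rewrite addn0; case: eqP => // ->; rewrite ltnn.
rewrite PS YR IH ?mul0r ?add0r; last by apply: ltn_trans ab; rewrite addnS.
rewrite big1 // => c /eqP cb; apply: IH; by rewrite -ltnS cb -addnS.
Qed.

Lemma sum_succ (F : 'I_m -> k) (a b : 'I_m) : b = a.+1 :> nat ->
  \sum_(c : 'I_m | c.+1 == b) F c = F a.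
Proof.
move=> ba; rewrite (big_pred1 a) // => c /=.
by rewrite ba eqSS.
Qed.

Lemma P_top j (a b : 'I_m) : b = (a + j)%N :> nat -> P j a b = 1.
Proof.
elim: j b => [|j IH] b ab.
  by rewrite expr0 mxE; move: ab; rewrite addn0 => /val_inj ->; rewrite eqxx.
have aj : (a + j < m)%N by apply: leq_ltn_trans (ltn_ord b); rewrite ab addnS.
rewrite PS YR P_high ?mul0r ?add0r; last by rewrite ab addnS.
by rewrite (sum_succ _ (a := Ordinal aj)) ?IH // ab addnS.
Qed.

Lemma P_sup j (a b : 'I_m) : b = a.+1 :> nat -> P j.+1 a b = P j a b * dd b + dd a ^+ j.
Proof. by move=> ba; rewrite PS YR (sum_succ _ ba) P_diag. Qed.


End Bidiag.

Section Cent.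
Variables (k : fieldType) (m' : nat) (dd : 'I_m'.+1 -> k).
Local Notation m := m'.+1.
Local Notation Y := (Ybd dd).

Definition Kry : 'M[k]_m := \matrix_(j, b) (Y ^+ j) 0 b.

Lemma Kry_unit : Kry \in unitmx.
Proof.
rewrite unitmxE det_trig.
  by rewrite big1 ?unitr1 // => i _; rewrite mxE P_top.
by apply/forallP => i; apply/forallP => j; apply/implyP => ij; rewrite mxE P_high.
Qed.

Lemma cent (Z : 'M[k]_m) : Y *m Z = Z *m Y ->
  exists w : 'rV[k]_m, Z = \sum_(j < m) w 0 j *: Y ^+ j.
Proof.
move=> hZ; pose w := row 0 Z *m invmx Kry; exists w.
pose Zp := \sum_(j < m) w 0 j *: Y ^+ j.
have cZp : GRing.comm Y Zp.
  rewrite /GRing.comm /Zp -!mulmxE mulmx_sumr mulmx_suml; apply: eq_bigr => j _.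
  by rewrite -scalemxAr -scalemxAl !mulmxE -exprS -exprSr.
have cZ : GRing.comm Y Z by rewrite /GRing.comm -!mulmxE.
have cW : GRing.comm Y (Z - Zp) by apply: commrB.
have r0 : row 0 (Z - Zp) = 0.
  rewrite linearB /= /Zp linear_sum /=.
  have -> : \sum_(j < m) row 0 (w 0 j *: Y ^+ j) = w *m Kry.
    rewrite mulmx_sum_row; apply: eq_bigr => j _; rewrite linearZ /=; congr (_ *: _).
    by apply/rowP => b; rewrite !mxE.
  by rewrite /w -mulmxA mulVmx ?Kry_unit ?mulmx1 ?subrr.
have KW : Kry *m (Z - Zp) = 0.
  apply/row_matrixP => j; rewrite row_mul row0.
  have -> : row j Kry = row 0 (Y ^+ j) by apply/rowP => b; rewrite !mxE.
  rewrite -row_mul mulmxE -(commrX j (commr_sym cW)) -mulmxE row_mul r0 mul0mx //.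
apply/eqP; rewrite -subr_eq0; apply/eqP.
by rewrite -[Z - Zp]mul1mx -(mulVmx Kry_unit) -mulmxA KW mulmx0.
Qed.

End Cent.

Section TrY.
Variables (k : fieldType) (m : nat) (dd : 'I_m -> k).

Lemma trY (B : 'M[k]_m) (hB : hess B) j :
  \tr (B *m Ybd dd ^+ j) = \sum_(a : 'I_m) (B a a * (Ybd dd ^+ j) a a +
                           \sum_(b : 'I_m | b.+1 == a) B a b * (Ybd dd ^+ j) b a).
Proof.
apply: eq_bigr => a _; rewrite mxE (bigD1 a) //=; congr (_ + _).
rewrite (bigID (fun b : 'I_m => b.+1 == a)) /= [X in _ + X]big1 ?addr0.
  apply: eq_bigl => b; case: (b =P a) => [->|_] /=; last by [].
  by apply/esym/negbTE; rewrite neq_ltn ltnSn orbT.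
move=> b /andP [ba bsa]; case: (ltngtP a b) => [ab|ab|ab].
- by rewrite P_low // mulr0.
- rewrite hB ?mul0r //; rewrite ltn_neqAle bsa /=; exact: ab.
- by move: ba; rewrite (val_inj ab) eqxx.
Qed.

End TrY.

Section Final.
Variables (k : fieldType) (m' : nat).
Local Notation m := m'.+1.

Definition subd (B : 'M[k]_m) := \sum_(a : 'I_m) \sum_(b : 'I_m | b.+1 == a) B a b.
Definition ddo (a : 'I_m) : k := (odd a)%:R.
Definition Phi (B : 'M[k]_m) :=
  \sum_(a : 'I_m) (B a a * ddo a + \sum_(b : 'I_m | b.+1 == a) B a b).

Lemma td_powers (B : 'M[k]_m) dd : (forall j, \tr (B *m Ybd dd ^+ j) = 0) ->
  exists X, B = X *m Ybd dd - Ybd dd *m X.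
Proof.
move=> hj; apply: td => Z /cent [w ->].
rewrite mulmx_sumr raddf_sum /= big1 // => j _.
by rewrite -scalemxAr linearZ /= hj mulr0.
Qed.

Lemma case_sub0 (B : 'M[k]_m) : hess B -> \tr B = 0 -> subd B = 0 ->
  exists X Y, B = X *m Y - Y *m X.
Proof.
move=> hB trB s0.
suff [X eX] : exists X, B = X *m Ybd (fun _ => 0) - Ybd (fun _ => 0) *m X.
  by exists X, (Ybd (fun _ => 0)).
apply: td_powers; case=> [|j]; first by rewrite expr0 mulmx1.
rewrite trY //.
have -> : \sum_(a : 'I_m) (B a a * (Ybd (fun _ => (0 : k)) ^+ j.+1) a a +
      \sum_(b : 'I_m | b.+1 == a) B a b * (Ybd (fun _ => (0:k)) ^+ j.+1) b a)
    = \sum_(a : 'I_m) \sum_(b : 'I_m | b.+1 == a) B a b * (0 : k) ^+ j.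
  apply: eq_bigr => a _; rewrite P_diag expr0n /= mulr0 add0r.
  apply: eq_bigr => b; move/eqP => ba.
  by rewrite P_sup ?mulr0 ?add0r // ba.
rewrite (eq_bigr (fun a : 'I_m => (\sum_(b : 'I_m | b.+1 == a) B a b) * 0 ^+ j)).
  by rewrite -big_distrl /= -/(subd B) s0 mul0r.
by move=> a _; rewrite big_distrl.
Qed.
Lemma ddoX (a : 'I_m) j : ddo a ^+ j.+1 = ddo a.
Proof. by rewrite /ddo; case: (odd a); rewrite ?expr1n ?expr0n. Qed.

Lemma sup1 j (a b : 'I_m) : b = a.+1 :> nat -> (Ybd ddo ^+ j.+1) a b = 1.
Proof.
move=> ba; elim: j => [|j IH].
  rewrite P_sup // expr0 expr0 mxE.
  have -> : (a == b) = false by apply/negbTE; apply/eqP => e; move: ba; rewrite e; exact: n_Sn.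
  by rewrite mul0r add0r.
rewrite P_sup // IH mul1r ddoX /ddo ba /=.
by case: (odd a); rewrite /= ?addr0 ?add0r.
Qed.

Lemma case_phi0 (B : 'M[k]_m) : hess B -> \tr B = 0 -> Phi B = 0 ->
  exists X Y, B = X *m Y - Y *m X.
Proof.
move=> hB trB p0.
suff [X eX] : exists X, B = X *m Ybd ddo - Ybd ddo *m X by exists X, (Ybd ddo).
apply: td_powers; case=> [|j]; first by rewrite expr0 mulmx1.
rewrite trY // -[RHS]p0 /Phi; apply: eq_bigr => a _; rewrite P_diag ddoX; congr (_ + _).
by apply: eq_bigr => b; move/eqP => ba; rewrite sup1 ?mulr1 // ba.
Qed.

Lemma Mdelta (M : 'M[k]_m) (i j : 'I_m) r s :
  (M *m delta_mx i j) r s = M r i * (s == j)%:R.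
Proof.
rewrite mxE (bigD1 i) //= big1 => [|c ci]; last by rewrite mxE (negPf ci) mulr0.
by rewrite mxE eqxx addr0.
Qed.

Lemma PhiD (M N : 'M[k]_m) : Phi (M + N) = Phi M + Phi N.
Proof.
rewrite /Phi -big_split; apply: eq_bigr => a _ /=.
rewrite mxE mulrDl.
under eq_bigr do rewrite mxE.
by rewrite big_split /= addrACA.
Qed.

Lemma PhiZ c (M : 'M[k]_m) : Phi (c *: M) = c * Phi M.
Proof.
rewrite /Phi mulr_sumr; apply: eq_bigr => a _.
rewrite mxE mulrDr mulrA mulr_sumr; congr (_ + _).
by apply: eq_bigr => b _; rewrite mxE.
Qed.

Lemma PhiN (M : 'M[k]_m) : Phi (- M) = - Phi M.
Proof. by rewrite -scaleN1r PhiZ mulN1r. Qed.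

Lemma shift (B : 'M[k]_m) (hB : hess B) (a0 b0 : 'I_m) :
  a0 = b0.+1 :> nat -> B a0 b0 != 0 ->
  exists T Ti : 'M[k]_m,
    [/\ T *m Ti = 1%:M, Ti *m T = 1%:M, hess (T *m B *m Ti) & Phi (T *m B *m Ti) = 0].
Proof.
move=> ab nz.
have ne : (a0 == b0) = false by apply/negbTE/eqP => e; move: ab; rewrite e; exact: n_Sn.
pose D := delta_mx b0 a0 : 'M[k]_m.
have DD : D *m D = 0 by rewrite mul_delta_mx_0 // ne.
pose c := B a0 b0 * (ddo b0 - ddo a0).
have cnz : c != 0.
  rewrite mulf_neq0 // /ddo ab /=; case: (odd b0) => /=.
    by rewrite subr0 oner_eq0.
  by rewrite sub0r oppr_eq0 oner_eq0.
pose t := - Phi B / c.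
exists (1%:M + t *: D), (1%:M - t *: D).
have TT : forall s, (1%:M + s *: D) *m (1%:M - s *: D) = 1%:M.
  move=> s; rewrite mulmxBr !mulmxDl !mulmx1 !mul1mx -!scalemxAr -!scalemxAl.
  by rewrite scalerA DD scaler0 addr0 addrK.
have TT' : forall s, (1%:M - s *: D) *m (1%:M + s *: D) = 1%:M.
  by move=> s; rewrite -scaleNr -[X in _ *m (_ + X)]opprK -scaleNr TT.
have BE : (1%:M + t *: D) *m B *m (1%:M - t *: D) =
    B + t *: (D *m B) - (t *: (B *m D) + (t * t) *: (D *m B *m D)).
  rewrite mulmxDl mul1mx mulmxBr mulmx1 mulmxDl -!scalemxAr -!scalemxAl.
  by rewrite !scalerA.
have eDB r s : (D *m B) r s = (r == b0)%:R * B a0 s by rewrite deltaM.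
have eBD r s : (B *m D) r s = B r b0 * (s == a0)%:R by rewrite Mdelta.
have eDBD r s : (D *m B *m D) r s = (r == b0)%:R * B a0 b0 * (s == a0)%:R.
  by rewrite Mdelta deltaM.
split; [exact: TT | exact: TT' | |].
  rewrite BE; move: (D *m B) (B *m D) (D *m B *m D) eDB eBD eDBD.
  move=> DB BD DBD eDB' eBD' eDBD' r s sr; rewrite !mxE eDB' eBD' eDBD'.
  have -> : B r s = 0 by apply: hB.
  have -> : (r == b0)%:R * B a0 s = 0 :> k.
    case: eqP => [er|]; last by rewrite mul0r.
    rewrite hB ?mulr0 //; apply: ltn_trans sr _; rewrite er ab //.
  have -> : B r b0 * (s == a0)%:R = 0 :> k.
    case: eqP => [es|]; last by rewrite mulr0.
    rewrite hB ?mul0r //; apply: leq_ltn_trans sr; rewrite es ab ltnW //.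
  have -> : (r == b0)%:R * B a0 b0 * (s == a0)%:R = 0 :> k.
    case: eqP => [er|]; last by rewrite !mul0r.
    case: eqP => [es|]; last by rewrite mulr0.
    by move: sr; rewrite er es ab => /ltnW/ltnW; rewrite ltnn.
  by rewrite !mulr0 !addr0 subr0.
have P1 : Phi (D *m B) = B a0 b0 * ddo b0.
  rewrite /Phi (bigD1 b0) //= [X in _ + X]big1 => [|a ab0]; last first.
    rewrite eDB (negPf ab0) mul0r mul0r add0r big1 // => b _.
    by rewrite eDB (negPf ab0) mul0r.
  rewrite eDB eqxx mul1r addr0 big1 ?addr0 // => b /eqP bb0.
  rewrite eDB eqxx mul1r hB //; rewrite ab -bb0 ltnS ltnSn //.
have P2 : Phi (B *m D) = B a0 b0 * ddo a0.
  rewrite /Phi (bigD1 a0) //= [X in _ + X]big1 => [|a aa0]; last first.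
    rewrite eBD (negPf aa0) mulr0 mul0r add0r big1 // => b /eqP ba.
    rewrite eBD; case: eqP => [eb|]; last by rewrite mulr0.
    rewrite hB ?mul0r //; rewrite -ba eb ab ltnS ltnSn //.
  rewrite eBD eqxx mulr1 addr0 big1 ?addr0 // => b /eqP ba.
  rewrite eBD; case: eqP => [eb|]; last by rewrite mulr0.
  by move: ba; rewrite eb; move/esym/n_Sn.
have P3 : Phi (D *m B *m D) = 0.
  rewrite /Phi big1 // => a _; rewrite eDBD.
  have -> : (a == b0)%:R * B a0 b0 * (a == a0)%:R = 0 :> k.
    case: eqP => [eb|]; last by rewrite !mul0r.
    by rewrite eb eq_sym ne mulr0.
  rewrite mul0r add0r big1 // => b /eqP ba; rewrite eDBD.
  case: eqP => [eb|]; last by rewrite !mul0r.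
  case: eqP => [ea|]; last by rewrite mulr0.
  move: ab ba; rewrite -ea -eb => ab ba; lia.
rewrite BE !PhiD PhiN !PhiD !PhiZ P1 P2 P3 mulr0 addr0.
by rewrite -addrA -mulrBr -mulrBr -/c /t divfK // addrN.
Qed.

Lemma shoda_hess (B : 'M[k]_m) : hess B -> \tr B = 0 ->
  exists T Ti X Y : 'M[k]_m,
    [/\ T *m Ti = 1%:M, Ti *m T = 1%:M & T *m B *m Ti = X *m Y - Y *m X].
Proof.
move=> hB trB; case: (eqVneq (subd B) 0) => s0.
  have [X [Y e]] := case_sub0 hB trB s0.
  by exists 1%:M, 1%:M, X, Y; rewrite !mulmx1 mul1mx.
case: (pickP (fun p : 'I_m * 'I_m => (p.2.+1 == p.1) && (B p.1 p.2 != 0))).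
  move=> [a0 b0] /andP [/eqP e nz] /=.
  have [T [Ti [TTi TiT hB' p0]]] := shift hB (esym e) nz.
  have tr' : \tr (T *m B *m Ti) = 0.
    by rewrite mxtrace_mulC mulmxA TiT mul1mx.
  have [X [Y e']] := case_phi0 hB' tr' p0.
  by exists T, Ti, X, Y.
move=> none; case/eqP: s0; rewrite /subd big1 // => a _; rewrite big1 // => b /eqP e.
by have := none (a, b); rewrite /= e eqxx /= => /negbFE/eqP.
Qed.

End Final.

Lemma shoda (k : fieldType) (m : nat) (A : 'M[k]_m) :
  \tr A = 0 -> exists X Y : 'M[k]_m, A = X *m Y - Y *m X.
Proof.
case: m A => [|m'] A trA.
  by exists 0, 0; apply/matrixP => [[]].
have [P [Pi [PPi PiP hB _]]] := hessenberg A 0.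
have trB : \tr (P *m A *m Pi) = 0 by rewrite mxtrace_mulC mulmxA PiP mul1mx.
have [T [Ti [X [Y [TTi TiT e]]]]] := shoda_hess hB trB.
pose Q := T *m P; pose Qi := Pi *m Ti.
have QQi : Q *m Qi = 1%:M by rewrite /Q /Qi mulmxA -(mulmxA T) PPi mulmx1 TTi.
have QiQ : Qi *m Q = 1%:M by rewrite /Q /Qi mulmxA -(mulmxA Pi) TiT mulmx1 PiP.
have eQ : Q *m A *m Qi = X *m Y - Y *m X.
  by rewrite /Q /Qi !mulmxA -e !mulmxA.
clearbody Q Qi.
exists (Qi *m X *m Q), (Qi *m Y *m Q).
have eA : A = Qi *m (Q *m A *m Qi) *m Q.
  by rewrite !mulmxA QiQ mul1mx -mulmxA QiQ mulmx1.
rewrite {1}eA eQ mulmxBr mulmxBl.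
have mm (U V : 'M[k]_m'.+1) : Qi *m U *m Q *m (Qi *m V *m Q) = Qi *m (U *m V) *m Q.
  by rewrite -!mulmxA (mulmxA Q) QQi mul1mx.
by rewrite !mm !mulmxA.
Qed.

Lemma castmx_mulG (R : nzRingType) m m' p p' q q' (e1 : m = m') (e2 : p = p') (e3 : q = q')
  (A : 'M[R]_(m, p)) (B : 'M[R]_(p, q)) :
  castmx (e1, e3) (A *m B) = castmx (e1, e2) A *m castmx (e2, e3) B.
Proof. by case: m' / e1; case: p' / e2; case: q' / e3; rewrite !castmx_id. Qed.

Section Cx.
Variables (k : fieldType) (n : int -> nat).
Variable (d : forall i : int, 'M[k]_(n i, n (i + 1))).
Hypothesis hd : is_complex d.

Lemma gen_cx j i (e : j + 1 = i) (E : n (j + 1) = n i) :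
  castmx (erefl, E) (d j) *m d i = 0.
Proof. by subst i; rewrite castmx_id hd. Qed.

Lemma dprev_cx i : dprev d i *m d i = 0.
Proof. exact: (gen_cx (subrK 1 i)). Qed.

Lemma gen_chain (f : forall i, 'M[k]_(n i)) (hf : is_chain_map d f)
  j i (e : j + 1 = i) (E : n (j + 1) = n i) :
  castmx (erefl, E) (d j) *m f i = f j *m castmx (erefl, E) (d j).
Proof. by subst i; rewrite !castmx_id hf. Qed.

Lemma dprev_chain f (hf : is_chain_map d f) i :
  dprev d i *m f i = f (i - 1) *m dprev d i.
Proof. exact: (gen_chain hf (subrK 1 i)). Qed.

Lemma gen_sub a b (e : a = b) (E : n (a + 1) = n (b + 1)) :
  (d b <= castmx (erefl, E) (d a))%MS.
Proof. by subst a; rewrite castmx_id. Qed.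

Lemma d_sub_prev i : (d i <= dprev d (i + 1))%MS.
Proof. exact: (gen_sub (addrK 1 i)). Qed.

End Cx.
Section Coh.
Variables (k : fieldType) (m m1 m2 : nat) (Kr : 'M[k]_(m1, m)) (Im : 'M[k]_(m2, m)).
Hypothesis ImK : (Im <= Kr)%MS.

Let Bm := row_base (Kr :\: Im)%MS.
Let Cm := row_base Im.
Let Mm := col_mx Bm Cm.
Let Pm := lsubmx (pinvmx Mm).
Let Qm := rsubmx (pinvmx Mm).

Lemma K_sub_M : (Kr <= Mm)%MS.
Proof.
rewrite /Mm -addsmxE -{1}(addsmx_diff_cap_eq Kr Im).
apply: addsmxS; first by rewrite eq_row_base.
by rewrite eq_row_base capmxSr.
Qed.

Lemma M_free : row_free Mm.
Proof.
rewrite /row_free /Mm -addsmxE (adds_eqmx (eq_row_base _) (eq_row_base _)).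
by rewrite mxrank_disjoint_sum ?capmx_diff.
Qed.

Lemma dec_K p (X : 'M[k]_(p, m)) : (X <= Kr)%MS -> X = X *m Pm *m Bm + X *m Qm *m Cm.
Proof.
move=> XK; have XM : (X <= Mm)%MS by apply: submx_trans XK K_sub_M.
rewrite -{1}(mulmxKpV XM) -[pinvmx Mm]hsubmxK mul_mx_row mul_row_col.
by rewrite /Pm /Qm !mulmx_lsub !mulmx_rsub.
Qed.

Lemma P_Im p (X : 'M[k]_(p, m)) : (X <= Im)%MS -> X *m Pm = 0.
Proof.
move=> XI; have: (X <= Cm)%MS by rewrite eq_row_base.
case/submxP=> W defX.
have XM : (X <= Mm)%MS by rewrite defX /Mm -addsmxE mulmx_sub // addsmxSr.
have e : X *m pinvmx Mm = row_mx 0 W.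
  apply: (row_free_inj M_free); rewrite (mulmxKpV XM) mul_row_col mul0mx add0r.
  exact: defX.
by rewrite /Pm mulmx_lsub e row_mxKl.
Qed.

Lemma BP : Bm *m Pm = 1%:M.
Proof.
have BM : (Bm <= Mm)%MS by rewrite /Mm -addsmxE addsmxSl.
have e : Bm *m pinvmx Mm = row_mx 1%:M 0.
  apply: (row_free_inj M_free); rewrite (mulmxKpV BM) mul_row_col mul1mx mul0mx addr0.
  done.
by rewrite /Pm mulmx_lsub e row_mxKl.
Qed.

Lemma B_K : (Bm <= Kr)%MS.
Proof. by rewrite eq_row_base diffmxSl. Qed.

Lemma C_Im : (Cm <= Im)%MS.
Proof. by rewrite eq_row_base. Qed.

End Coh.

Section Main.
Variables (k : fieldType) (n : int -> nat).
Variable (d : forall i : int, 'M[k]_(n i, n (i + 1))).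
Hypothesis hd : is_complex d.

Definition Bh i := cohom_basis d i.
Definition Ph i := lsubmx (pinvmx (col_mx (Bh i) (row_base (dprev d i)))).
Definition Qh i := rsubmx (pinvmx (col_mx (Bh i) (row_base (dprev d i)))).

Lemma ImK i : (dprev d i <= kermx (d i))%MS.
Proof. exact/sub_kermxP/dprev_cx. Qed.

Lemma cohomE f i : cohom_map d f i = Bh i *m f i *m Ph i.
Proof. by rewrite /cohom_map /Ph mulmx_lsub. Qed.

Lemma decK i p (X : 'M[k]_(p, n i)) : (X <= kermx (d i))%MS ->
  X = X *m Ph i *m Bh i + X *m Qh i *m row_base (dprev d i).
Proof. rewrite /Ph /Qh /Bh /cohom_basis /cycles. by apply: dec_K. Qed.

Lemma PIm i p (X : 'M[k]_(p, n i)) : (X <= dprev d i)%MS -> X *m Ph i = 0.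
Proof. by rewrite /Ph /Bh /cohom_basis /cycles; apply: P_Im. Qed.

Lemma BPh i : Bh i *m Ph i = 1%:M.
Proof. by rewrite /Ph /Bh /cohom_basis /cycles; apply: BP. Qed.

Lemma BK i : (Bh i <= kermx (d i))%MS.
Proof. by rewrite /Bh /cohom_basis /cycles; apply: B_K. Qed.

Lemma Bd i : Bh i *m d i = 0.
Proof. exact/sub_kermxP/BK. Qed.

Lemma cm_K f (hf : is_chain_map d f) i p (X : 'M[k]_(p, n i)) :
  (X <= kermx (d i))%MS -> (X *m f i <= kermx (d i))%MS.
Proof.
move/sub_kermxP=> XK; apply/sub_kermxP.
by rewrite -mulmxA -hf mulmxA XK mul0mx.
Qed.

Lemma cm_Im f (hf : is_chain_map d f) i p (X : 'M[k]_(p, n i)) :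
  (X <= dprev d i)%MS -> (X *m f i <= dprev d i)%MS.
Proof.
case/submxP=> W ->; rewrite -mulmxA (dprev_chain hf) mulmxA; exact: submxMl.
Qed.

Lemma cohom_mul f g (hf : is_chain_map d f) (hg : is_chain_map d g) i :
  Bh i *m (f i *m g i) *m Ph i = (Bh i *m f i *m Ph i) *m (Bh i *m g i *m Ph i).
Proof.
have BfK : (Bh i *m f i <= kermx (d i))%MS by apply: cm_K => //; exact: BK.
rewrite mulmxA {1}(decK BfK) !mulmxDl.
have -> : Bh i *m f i *m Qh i *m row_base (dprev d i) *m g i *m Ph i = 0.
  have CgP : row_base (dprev d i) *m g i *m Ph i = 0.
    by apply: PIm; apply: cm_Im => //; rewrite eq_row_base.
  by rewrite -mulmxA -mulmxA (mulmxA (row_base _)) CgP mulmx0.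
by rewrite addr0 !mulmxA.
Qed.

Lemma cohom_null (h : forall i : int, 'M[k]_(n (i + 1), n i)) i :
  Bh i *m (d i *m h i + castmx (eq_prev n i, eq_prev n i) (h (i - 1) *m d (i - 1)))
     *m Ph i = 0.
Proof.
rewrite (castmx_mulG _ (erefl (n (i - 1)))) mulmxDr mulmxDl mulmxA Bd !mul0mx add0r.
rewrite -!mulmxA -/(dprev d i) PIm ?mulmx0 //.
Qed.

Lemma chain_mul f g : is_chain_map d f -> is_chain_map d g ->
  is_chain_map d (fun i => f i *m g i).
Proof. by move=> hf hg i; rewrite mulmxA hf -!mulmxA hg. Qed.

Lemma chain_sub f g : is_chain_map d f -> is_chain_map d g ->
  is_chain_map d (fun i => f i - g i).
Proof. by move=> hf hg i; rewrite mulmxBr mulmxBl hf hg. Qed.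

Lemma dir_ab phi (hphi : is_chain_map d phi) :
  (exists alpha beta : forall i : int, 'M[k]_(n i),
      [/\ is_chain_map d alpha, is_chain_map d beta &
          chain_homotopic d phi
            (fun i => beta i *m alpha i - alpha i *m beta i)]) ->
  forall i : int, \tr (cohom_map d phi i) = 0.
Proof.
move=> [a [b [ha hb [h Hh]]]] i; rewrite cohomE.
have -> : phi i = (b i *m a i - a i *m b i) + (phi i - (b i *m a i - a i *m b i)).
  by rewrite addrC subrK.
rewrite Hh mulmxDr mulmxDl cohom_null addr0 mulmxBr mulmxBl !cohom_mul //.
by rewrite raddfB /= mxtrace_mulC subrr.
Qed.

Lemma chain_P (Z : forall i : int, 'M[k]_(\rank (cycles d i :\: dprev d i))) :
  is_chain_map d (fun i => Ph i *m Z i *m Bh i).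
Proof.
move=> i; rewrite -(mulmxA (Ph i *m Z i)) Bd mulmx0 !mulmxA PIm ?mul0mx //.
exact: d_sub_prev.
Qed.

Definition Sd j := pinvmx (d j).
Definition Qd i := castmx (eq_prev n i, eq_prev n i) (Sd (i - 1) *m d (i - 1)).
Definition Pd i : 'M[k]_(n i) := 1%:M - d i *m Sd i - Qd i.
Definition hom (f : forall i : int, 'M[k]_(n i)) j : 'M[k]_(n (j + 1), n j) :=
  Sd j *m f j + Pd (j + 1) *m f (j + 1) *m Sd j.

Lemma gen_h1 a j (e : a = j) (E : n (a + 1) = n (j + 1)) :
  d j *m castmx (E, E) (Sd a *m d a) = d j.
Proof. by subst a; rewrite castmx_id mulmxA mulmxKpV. Qed.

Lemma h1 j : d j *m Pd (j + 1) = 0.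
Proof.
rewrite /Pd !mulmxBr mulmx1 mulmxA hd mul0mx subr0 /Qd.
by rewrite (gen_h1 (addrK 1 j)) subrr.
Qed.

Lemma gen_h2 a i (e : a + 1 = i) (E : n (a + 1) = n i) :
  castmx (E, E) (Sd a *m d a) *m d i = 0.
Proof. by subst i; rewrite castmx_id -mulmxA hd mulmx0. Qed.

Lemma h2 i : (Pd i <= kermx (d i))%MS.
Proof.
apply/sub_kermxP; rewrite /Pd !mulmxBl mul1mx mulmxKpV // subrr sub0r /Qd.
by rewrite (gen_h2 (subrK 1 i)) oppr0.
Qed.

Lemma gen_h3 a m' (E : n (a + 1) = m') :
  castmx (erefl, E) (d a) *m castmx (E, E) (Sd a *m d a) = castmx (erefl, E) (d a).
Proof. by case: m' / E; rewrite !castmx_id mulmxA mulmxKpV. Qed.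

Lemma h3 i p (X : 'M[k]_(p, n i)) : (X <= dprev d i)%MS -> X *m Qd i = X.
Proof. by case/submxP=> W ->; rewrite -mulmxA /Qd /dprev gen_h3. Qed.

Lemma gen_h4 f (hf : is_chain_map d f) j i (e : j + 1 = i) (E : n (j + 1) = n i) :
  castmx (E, E) (hom f j *m d j) =
  castmx (E, E) (Sd j *m d j) *m f i + Pd i *m f i *m castmx (E, E) (Sd j *m d j).
Proof.
subst i; rewrite !castmx_id /hom mulmxDl -!mulmxA hf.
by rewrite !mulmxA.
Qed.

Lemma h4 f (hf : is_chain_map d f) i :
  castmx (eq_prev n i, eq_prev n i) (hom f (i - 1) *m d (i - 1)) =
  Qd i *m f i + Pd i *m f i *m Qd i.
Proof. exact: (gen_h4 hf (subrK 1 i)). Qed.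

Lemma null_homotopic f (hf : is_chain_map d f)
  (hz : forall i p (X : 'M[k]_(p, n i)), (X <= kermx (d i))%MS -> (X *m f i <= dprev d i)%MS) :
  chain_homotopic d f (fun i => 0).
Proof.
exists (hom f) => i; rewrite subr0 (h4 hf).
rewrite h3; last by apply: hz; exact: h2.
rewrite /hom mulmxDr (mulmxA (d i) (Sd i)) (mulmxA (d i) (Pd (i + 1) *m _)) (mulmxA (d i) (Pd (i + 1))) h1 !mul0mx addr0.
rewrite addrA -!mulmxDl /Pd.
have zm (V : zmodType) (a b c : V) : a + b + (c - a - b) = c.
  by rewrite -[c - a - b]addrA -opprD [_ + (c - _)]addrC subrK.
by rewrite zm mul1mx.
Qed.

Section BA.
Variable phi : forall i : int, 'M[k]_(n i).
Hypothesis hphi : is_chain_map d phi.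
Hypothesis htr : forall i : int, \tr (cohom_map d phi i) = 0.

Lemma XYex i : exists XY : 'M[k]_(\rank (cycles d i :\: dprev d i)) *
                          'M[k]_(\rank (cycles d i :\: dprev d i)),
  cohom_map d phi i == XY.1 *m XY.2 - XY.2 *m XY.1.
Proof. by have [X [Y e]] := shoda (htr i); exists (X, Y); rewrite e. Qed.

Definition XY i := xchoose (XYex i).
Lemma XYP i : cohom_map d phi i = (XY i).1 *m (XY i).2 - (XY i).2 *m (XY i).1.
Proof. exact/eqP/(xchooseP (XYex i)). Qed.

Definition alpha i := Ph i *m (XY i).2 *m Bh i.
Definition beta i := Ph i *m (XY i).1 *m Bh i.

Lemma gammaE i :
  beta i *m alpha i - alpha i *m beta i = Ph i *m cohom_map d phi i *m Bh i.
Proof.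
have e (Z1 Z2 : 'M[k]_(\rank (cycles d i :\: dprev d i))) :
    (Ph i *m Z1 *m Bh i) *m (Ph i *m Z2 *m Bh i) = Ph i *m (Z1 *m Z2) *m Bh i.
  rewrite (mulmxA (Ph i *m Z1 *m Bh i) (Ph i *m Z2)) (mulmxA (Ph i *m Z1 *m Bh i) (Ph i) Z2).
  rewrite -(mulmxA (Ph i *m Z1) (Bh i) (Ph i)).
  by rewrite BPh mulmx1 -(mulmxA (Ph i) Z1 Z2).
by rewrite /alpha /beta !e -mulmxBl -mulmxBr XYP.
Qed.

Lemma psi_zero i p (X : 'M[k]_(p, n i)) : (X <= kermx (d i))%MS ->
  (X *m (phi i - (beta i *m alpha i - alpha i *m beta i)) <= dprev d i)%MS.
Proof.
move=> XK; rewrite gammaE.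
have hpsi : is_chain_map d (fun i => phi i - Ph i *m cohom_map d phi i *m Bh i).
  by apply: chain_sub => //; exact: chain_P.
have Bpsi : (Bh i *m (phi i - Ph i *m cohom_map d phi i *m Bh i) <= dprev d i)%MS.
  have BfK : (Bh i *m phi i <= kermx (d i))%MS by apply: cm_K => //; exact: BK.
  rewrite mulmxBr (mulmxA (Bh i) (Ph i *m _)) (mulmxA (Bh i) (Ph i)) BPh mul1mx.
  rewrite {1}(decK BfK) -cohomE (addrC (cohom_map d phi i *m Bh i)) addrK.
  apply: submx_trans (submxMl _ _) _; rewrite eq_row_base //.
rewrite {1}(decK XK) mulmxDl; apply: addmx_sub.
  rewrite -(mulmxA (X *m Ph i)); exact: submx_trans (submxMl _ _) Bpsi.
rewrite -(mulmxA (X *m Qh i)); apply: submx_trans (submxMl _ _) _.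
by apply: (cm_Im hpsi); rewrite eq_row_base.
Qed.

Lemma dir_ba : exists alpha beta : forall i : int, 'M[k]_(n i),
      [/\ is_chain_map d alpha, is_chain_map d beta &
          chain_homotopic d phi
            (fun i => beta i *m alpha i - alpha i *m beta i)].
Proof.
exists alpha, beta; split; try exact: chain_P.
have hpsi : is_chain_map d (fun i => phi i - (beta i *m alpha i - alpha i *m beta i)).
  by apply: chain_sub => //; apply: chain_sub; apply: chain_mul; exact: chain_P.
have [h Hh] := null_homotopic hpsi (@psi_zero).
by exists h => i; move: (Hh i); rewrite subr0.
Qed.

End BA.

End Main.

Theorem theorem3 (k : fieldType) (n : int -> nat)
  (d : forall i : int, 'M[k]_(n i, n (i + 1))) (hd : is_complex d)
  (phi : forall i : int, 'M[k]_(n i)) (hphi : is_chain_map d phi) :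
  (exists alpha beta : forall i : int, 'M[k]_(n i),
      [/\ is_chain_map d alpha, is_chain_map d beta &
          chain_homotopic d phi
            (fun i => beta i *m alpha i - alpha i *m beta i)])
  <-> (forall i : int, \tr (cohom_map d phi i) = 0).
Proof.
split; first exact: dir_ab.
exact: dir_ba.
Qed.
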